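(* Let $G_2$ be the graph with vertices $v_1,\dots,v_6$ and edges $a_1=v_2v_6$, $a_2=v_2v_4$, $a_3=v_4v_6$, $a_4=v_1v_3$, $a_5=v_3v_5$, $a_6=v_1v_5$, $a_7=v_2v_5$, $a_8=v_1v_4$, $a_9=v_3v_6$. Then $$F^{G_2}(\mathbf{x},y)=\frac{1}{(1-yx_1x_5x_8)(1-yx_2x_6x_9)(1-yx_3x_4x_7)(1-yx_7x_8x_9)}+\frac{y^2x_1x_2x_3x_4x_5x_6}{(1-yx_1x_5x_8)(1-yx_2x_6x_9)(1-yx_3x_4x_7)(1-y^2x_1x_2x_3x_4x_5x_6)},$$ and consequently $F^{G_2}(y)=\frac{1+y+y^2}{(1-y)^3(1-y^2)}$.
   Context: For a finite graph $G$ with edges $a_1,\dots,a_n$, a magic labelling is an assignment of nonnegative integer labels $\alpha_i$ to the edges $a_i$ such that for every vertex $v$ the sum of the labels of the edges incident to $v$ equals the same number $s=s(\alpha)$ (the magic sum). A labelling is identified with $\alpha=(\alpha_1,\dots,\alpha_n)\in\mathbb{N}^n$, and $S(G)$ is the set of all magic labellings. Define the formal power series $F^G(\mathbf{x},y)=\sum_{\alpha\in S(G)}x_1^{\alpha_1}\cdots x_n^{\alpha_n}y^{s(\alpha)}$ and $F^G(y)=F^G(1,\dots,1,y)=\sum_{s\ge0}h_G(s)y^s$, where $h_G(s)$ is the number of magic labellings with magic sum $s$. *)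

(* Defs.v *)
From mathcomp Require Import all_boot all_order all_algebra.
From mathcomp Require Import mpoly.
Set Implicit Arguments. Unset Strict Implicit. Unset Printing Implicit Defensive.
Import GRing.Theory.
Local Open Scope ring_scope.

Definition incident (nv ne : nat) (ends : 'I_ne -> 'I_nv * 'I_nv)
  (v : 'I_nv) (i : 'I_ne) : bool := ((ends i).1 == v) || ((ends i).2 == v).

Definition is_magic (nv ne : nat) (ends : 'I_ne -> 'I_nv * 'I_nv)
  (alpha : 'I_ne -> nat) (s : nat) : bool :=
  [forall v : 'I_nv, (\sum_(i < ne | incident ends v i) alpha i)%N == s].

(* The graph G_2: vertex v_k is (inord (k-1)) : 'I_6, edge a_k is
   (inord (k-1)) : 'I_9. *)
Definition G2_edges : seq (nat * nat) :=
  [:: (2,6); (2,4); (4,6); (1,3); (3,5); (1,5); (2,5); (1,4); (3,6)].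

Definition G2_ends (i : 'I_9) : 'I_6 * 'I_6 :=
  let e := nth (0,0)%N G2_edges i in (inord e.1.-1, inord e.2.-1).

(* Formal power series in the 10 variables x_1..x_9 (indices 0..8) and
   y (index 9) are represented by their coefficient functions on monomials
   'X_{1..10}. *)
Definition fps := 'X_{1..10} -> int.

Definition X (k : nat) : {mpoly int[10]} := 'X_(inord k.-1).
Definition Y : {mpoly int[10]} := 'X_(inord 9).

(* F^{G_2}(x,y) = sum over magic labellings alpha of x^alpha y^{s(alpha)}:
   the coefficient of x^alpha y^s is 1 iff alpha is magic with sum s. *)
Definition FG2 : fps := fun m =>
  (is_magic G2_ends (fun i : 'I_9 => m (inord i)) (m (inord 9)) : nat)%:Z.

Definition mul_poly_fps (p : {mpoly int[10]}) (f : fps) : fps := fun m =>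
  \sum_(m' <- msupp p | (m' <= m)%MM) p@_m' * f (m - m')%MM.

(* Every label is at most s (each edge is incident to a vertex whose
   incident labels sum to s), so labellings are enumerated with labels in
   'I_s.+1. *)
Definition hG2 (s : nat) : nat :=
  #|[set a : {ffun 'I_9 -> 'I_s.+1} |
      is_magic G2_ends (fun i => nat_of_ord (a i)) s]|.

Definition mul_poly_fps1 (p : {poly int}) (h : nat -> nat) (s : nat) : int :=
  \sum_(k < s.+1) p`_k * (h (s - k)%N)%:Z.

(* Main.v *)
Require Import Defs.
From mathcomp Require Import all_boot all_order all_algebra.
From mathcomp Require Import mpoly.
From mathcomp Require Import zify ring.
Import GRing.Theory.
Local Open Scope ring_scope.


Lemma mpf_sup p f m (s : seq 'X_{1..10}) : uniq s -> {subset msupp p <= s} ->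
  mul_poly_fps p f m = \sum_(v <- s | (v <= m)%MM) p@_v * f (m - v)%MM.
Proof.
move=> us sub; rewrite /mul_poly_fps.
rewrite [RHS](bigID (fun v => v \in msupp p)) /=.
rewrite [X in _ = _ + X]big1 ?addr0; last first.
  by move=> v /andP[_ /memN_msupp_eq0 ->]; rewrite mul0r.
rewrite -big_filter -[RHS]big_filter; apply: perm_big.
apply: uniq_perm; rewrite ?filter_uniq ?msupp_uniq // => v; rewrite !mem_filter.
case Hv: (v \in msupp p); rewrite ?andbF //= andbT.
by rewrite (sub _ Hv) andbT.
Qed.

Lemma mpf_sub p q f m : mul_poly_fps (p - q) f m = mul_poly_fps p f m - mul_poly_fps q f m.
Proof.
set s := undup (msupp p ++ msupp q).
have us : uniq s := undup_uniq _.
rewrite !(@mpf_sup _ _ _ s) //.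
- rewrite -sumrB; apply: eq_bigr => v _; by rewrite mcoeffB mulrBl.
- by move=> v hv; rewrite mem_undup mem_cat hv orbT.
- by move=> v hv; rewrite mem_undup mem_cat hv.
- by move=> v /msuppB_le; rewrite mem_undup.
Qed.

Lemma lem0 (m : 'X_{1..10}) : (0 <= m)%MM.
Proof. by apply/mnm_lepP => i; rewrite mnm0E. Qed.

Lemma mpf_one f m : mul_poly_fps 1 f m = f m.
Proof.
rewrite (@mpf_sup _ _ _ [:: 0%MM]) //.
  by rewrite big_cons big_nil lem0 mcoeff1 eqxx mul1r subm0 addr0.
move=> v; rewrite mcoeff_msupp mcoeff1 inE; by case: (v == 0%MM); rewrite ?eqxx.
Qed.

Lemma lem_addsub (u w m : 'X_{1..10}) : (u <= m)%MM -> ((u + w <= m)%MM = (w <= m - u)%MM).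
Proof.
move=> /mnm_lepP h; apply/mnm_lepP/mnm_lepP => H i; have := h i; have := H i;
  rewrite mnmDE mnmBE; lia.
Qed.

Lemma mpf_X u q f m : mul_poly_fps ('X_[u] * q) f m =
  if (u <= m)%MM then mul_poly_fps q f (m - u)%MM else 0.
Proof.
rewrite (mulrC 'X_[u]).
rewrite (@mpf_sup _ _ _ [seq (u + w)%MM | w <- msupp q]).
- rewrite big_map; case: ifP => hu.
    rewrite /mul_poly_fps; apply: eq_big => w; first by rewrite lem_addsub.
    by move=> _; rewrite mcoeffMX submDA.
  apply: big1 => w hw; exfalso; move: hu; by rewrite (lepm_trans (lem_addr u w) hw).
- by rewrite map_inj_uniq ?msupp_uniq //; apply: addmI.
- by move=> v; rewrite (perm_mem (msuppMX q u)).
Qed.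

Definition fpsT (u : 'X_{1..10}) (g : fps) : fps :=
  fun m => g m - (if (u <= m)%MM then g (m - u)%MM else 0).

Lemma mpf_T u q f m : mul_poly_fps ((1 - 'X_[u]) * q) f m = fpsT u (mul_poly_fps q f) m.
Proof. by rewrite mulrBl mul1r mpf_sub mpf_X. Qed.

Lemma T_ext u g1 g2 : (forall m, g1 m = g2 m) -> forall m, fpsT u g1 m = fpsT u g2 m.
Proof. by move=> h m; rewrite /fpsT !h. Qed.
Lemma incE (v : 'I_6) (i : 'I_9) : incident G2_ends v i =
  (((nth (0,0) G2_edges i).1.-1 == v :> nat) || ((nth (0,0) G2_edges i).2.-1 == v :> nat))%N.
Proof.
have H : all (fun e : nat * nat => (e.1.-1 < 6) && (e.2.-1 < 6))%N G2_edges by [].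
have /andP[h1 h2] := all_nthP (0,0)%N H i (ltn_ord i).
by rewrite /incident /G2_ends /= -!val_eqE /= !inordK.
Qed.
Lemma magicE (a : 'I_9 -> nat) s : is_magic G2_ends a s =
  [&& (a (inord 3) + a (inord 5) + a (inord 7) == s)%N,
      (a (inord 0) + a (inord 1) + a (inord 6) == s)%N,
      (a (inord 3) + a (inord 4) + a (inord 8) == s)%N,
      (a (inord 1) + a (inord 2) + a (inord 7) == s)%N,
      (a (inord 4) + a (inord 5) + a (inord 6) == s)%N &
      (a (inord 0) + a (inord 2) + a (inord 8) == s)%N].
Proof.
have E v : (v < 6)%N -> (\sum_(i < 9 | incident G2_ends (inord v) i) a i)%N =
   (\sum_(0 <= i < 9) (if ((nth (0,0) G2_edges i).1.-1 == v) || ((nth (0,0) G2_edges i).2.-1 == v)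
       then a (inord i) else 0))%N.
  move=> hv; rewrite big_mkcond big_mkord; apply: eq_bigr => i _.
  by rewrite incE inordK // inord_val.
have I9 : index_iota 0 9 = [:: 0;1;2;3;4;5;6;7;8]%N by [].
rewrite /is_magic; apply/forallP/idP.
  move=> H; move: (H (inord 0)) (H (inord 1)) (H (inord 2)) (H (inord 3)) (H (inord 4)) (H (inord 5)).
  rewrite !E // I9 !big_cons !big_nil /= ?addnA ?(addn0, add0n).
  by move=> -> -> -> -> -> ->.
case/and5P => H0 H1 H2 H3 /andP[H4 H5] v; rewrite -(inord_val v).
case: v => [[|[|[|[|[|[|//]]]]]] Hv] /=;
  rewrite E // I9 !big_cons big_nil /= ?addnA ?(addn0, add0n) //.
Qed.

Definition cm (m : 'X_{1..10}) (k : nat) : nat := m (inord k).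
Arguments cm : simpl never.

Definition mg (m : 'X_{1..10}) : bool :=
  is_magic G2_ends (fun i : 'I_9 => m (inord i)) (m (inord 9)).

Lemma mgE m : mg m =
  [&& (cm m 3 + cm m 5 + cm m 7 == cm m 9)%N,
      (cm m 0 + cm m 1 + cm m 6 == cm m 9)%N,
      (cm m 3 + cm m 4 + cm m 8 == cm m 9)%N,
      (cm m 1 + cm m 2 + cm m 7 == cm m 9)%N,
      (cm m 4 + cm m 5 + cm m 6 == cm m 9)%N &
      (cm m 0 + cm m 2 + cm m 8 == cm m 9)%N].
Proof. by rewrite /mg magicE !inordK. Qed.

Lemma lem10 (u m : 'X_{1..10}) : (u <= m)%MM =
  all (fun k => cm u k <= cm m k)%N (iota 0 10).
Proof.
apply/mnm_lepP/allP => [H k _ | H i]; first exact: H.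
by rewrite -(inord_val i); apply: H; rewrite mem_iota /= add0n.
Qed.

Lemma cmB u m k : cm (m - u) k = (cm m k - cm u k)%N.
Proof. by rewrite /cm mnmBE. Qed.

Ltac splitb := repeat match goal with H : is_true (_ && _) |- _ => case/andP: H => ? ? end.
Ltac splitg := repeat (apply/andP; split).

Lemma mg_sub u m : mg u -> (u <= m)%MM -> mg (m - u) = mg m.
Proof.
rewrite !mgE lem10 /= !cmB => hu hle; splitb.
by apply/idP/idP => H; splitb; splitg; lia.
Qed.

Lemma mg_T u g h : mg u -> (forall m, g m = (mg m)%:Z * h m) ->
  forall m, fpsT u g m = (mg m)%:Z * fpsT u h m.
Proof.
move=> hu H m; rewrite /fpsT; case: ifP => hle; last by rewrite !subr0 H.
by rewrite !H mg_sub // mulrBr.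
Qed.


Record V6 := V { x1 : nat; x2 : nat; x3 : nat; x4 : nat; x5 : nat; x6 : nat }.

Definition le6 (a b : V6) : bool :=
  [&& x1 a <= x1 b, x2 a <= x2 b, x3 a <= x3 b, x4 a <= x4 b, x5 a <= x5 b & x6 a <= x6 b]%N.
Definition sub6 (a b : V6) : V6 :=
  V (x1 a - x1 b) (x2 a - x2 b) (x3 a - x3 b) (x4 a - x4 b) (x5 a - x5 b) (x6 a - x6 b).
Definition add6 (a b : V6) : V6 :=
  V (x1 a + x1 b) (x2 a + x2 b) (x3 a + x3 b) (x4 a + x4 b) (x5 a + x5 b) (x6 a + x6 b).
Definition tr6 (k a : V6) : V6 :=
  V (minn (x1 a) (x1 k)) (minn (x2 a) (x2 k)) (minn (x3 a) (x3 k))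
    (minn (x4 a) (x4 k)) (minn (x5 a) (x5 k)) (minn (x6 a) (x6 k)).
Definition small (v : V6) : bool :=
  [&& x1 v <= 1, x2 v <= 1, x3 v <= 1, x4 v <= 1, x5 v <= 1 & x6 v <= 1]%N.
Definition zero6 (a : V6) : bool :=
  [&& x1 a == 0, x2 a == 0, x3 a == 0, x4 a == 0, x5 a == 0 & x6 a == 0]%N.
Definition one6 (a : V6) : bool :=
  [&& x1 a == 1, x2 a == 1, x3 a == 1, x4 a == 1, x5 a == 1 & x6 a == 1]%N.

Definition T6 (v : V6) (H : V6 -> int) (x : V6) : int :=
  H x - (if le6 v x then H (sub6 x v) else 0).

Definition dep (k : V6) (H : V6 -> int) := forall x, H x = H (tr6 k x).

Lemma T6_dep k v H : small v -> dep k H -> dep (add6 k v) (T6 v H).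
Proof.
case: k v => k1 k2 k3 k4 k5 k6 [v1 v2 v3 v4 v5 v6] hv h [y1 y2 y3 y4 y5 y6].
rewrite /T6 h [in RHS]h [H (sub6 _ _)]h [in RHS](h (sub6 _ _)).
move: hv; rewrite /small /le6 /tr6 /sub6 /add6 /= => hv; splitb.
have -> : [&& v1 <= y1, v2 <= y2, v3 <= y3, v4 <= y4, v5 <= y5 & v6 <= y6]%N =
          [&& v1 <= minn y1 (k1 + v1), v2 <= minn y2 (k2 + v2), v3 <= minn y3 (k3 + v3),
              v4 <= minn y4 (k4 + v4), v5 <= minn y5 (k5 + v5) & v6 <= minn y6 (k6 + v6)]%N.
  by apply/idP/idP => Hy; splitb; splitg; lia.
congr (_ - _); first by congr H; congr V; lia.
case: ifP => // Hy; splitb; congr H; congr V; lia.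
Qed.

Definition vA := V 1 0 0 0 1 0.
Definition vB := V 0 1 0 0 0 1.
Definition vC := V 0 0 1 1 0 0.
Definition vD := V 0 0 0 1 1 1.
Definition vE := V 1 1 1 0 0 0.

Definition N6 := T6 vA (T6 vB (T6 vC (T6 vD (T6 vE (fun _ => 1))))).

Lemma N6_dep : dep (V 2 2 2 2 2 2) N6.
Proof.
apply: (T6_dep (V 1 2 2 2 1 2)) => //.
apply: (T6_dep (V 1 1 2 2 1 1)) => //.
apply: (T6_dep (V 1 1 1 1 1 1)) => //.
apply: (T6_dep (V 1 1 1 0 0 0)) => //.
apply: (T6_dep (V 0 0 0 0 0 0)) => //.
Qed.

Definition ex6 (x : V6) : bool := N6 x == (zero6 x)%:Z - (one6 x)%:Z.

Definition check : bool :=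
  let r := iota 0 3 in
  all (fun a => all (fun b => all (fun c => all (fun d =>
    ex6 (V a b c (c + d) (a + d) (b + d)) && ex6 (V (a + d) (b + d) (c + d) c a b))
  r) r) r) r.

Lemma check_ok : check.
Proof. vm_compute. reflexivity. Qed.

Lemma N6E x : (x4 x + x1 x = x5 x + x3 x)%N -> (x5 x + x2 x = x6 x + x1 x)%N ->
  N6 x = (zero6 x)%:Z - (one6 x)%:Z.
Proof.
case: x => y1 y2 y3 y4 y5 y6 /= h1 h2.
have hr y : (minn y 2 \in iota 0 3)%N by rewrite mem_iota; lia.
have := check_ok; rewrite /check.
case: (leqP y1 y5) => h.
  move=> /allP /(_ _ (hr y1)) /allP /(_ _ (hr y2)) /allP /(_ _ (hr y3)).
  move=> /allP /(_ _ (hr (y5 - y1)%N)) /andP[+ _] => /eqP.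
  set x' := V _ _ _ _ _ _.
  have E : tr6 (V 2 2 2 2 2 2) (V y1 y2 y3 y4 y5 y6) = tr6 (V 2 2 2 2 2 2) x'.
    by rewrite /tr6 /x' /=; congr V; lia.
  move=> Hx; rewrite [N6 (V y1 _ _ _ _ _)]N6_dep E -N6_dep Hx.
  by rewrite /zero6 /one6 /x' /=; congr (_ - _); congr (Posz (nat_of_bool _)); apply/idP/idP => H; splitb; splitg; lia.
move=> /allP /(_ _ (hr y5)) /allP /(_ _ (hr y6)) /allP /(_ _ (hr y4)).
move=> /allP /(_ _ (hr (y1 - y5)%N)) /andP[_ +] => /eqP.
set x' := V _ _ _ _ _ _.
have E : tr6 (V 2 2 2 2 2 2) (V y1 y2 y3 y4 y5 y6) = tr6 (V 2 2 2 2 2 2) x'.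
  by rewrite /tr6 /x' /=; congr V; lia.
move=> Hx; rewrite [N6 (V y1 _ _ _ _ _)]N6_dep E -N6_dep Hx.
by rewrite /zero6 /one6 /x' /=; congr (_ - _); congr (Posz (nat_of_bool _)); apply/idP/idP => H; splitb; splitg; lia.
Qed.


Lemma U_ex (k : nat) : {u : 'X_{1..10} | u = U_(inord k)%MM}.
Proof. by exists U_(inord k)%MM. Qed.
Definition U (k : nat) : 'X_{1..10} := sval (U_ex k).
Lemma Ueq k : U k = U_(inord k)%MM. Proof. exact: svalP (U_ex k). Qed.
Lemma uA_ex : {u : 'X_{1..10} | u = (U 9 + U 0 + U 4 + U 7)%MM}.
Proof. by eexists. Qed.
Definition uA := sval uA_ex.
Lemma uAeq : uA = (U 9 + U 0 + U 4 + U 7)%MM. Proof. exact: svalP uA_ex. Qed.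
Lemma uB_ex : {u : 'X_{1..10} | u = (U 9 + U 1 + U 5 + U 8)%MM}.
Proof. by eexists. Qed.
Definition uB := sval uB_ex.
Lemma uBeq : uB = (U 9 + U 1 + U 5 + U 8)%MM. Proof. exact: svalP uB_ex. Qed.
Lemma uC_ex : {u : 'X_{1..10} | u = (U 9 + U 2 + U 3 + U 6)%MM}.
Proof. by eexists. Qed.
Definition uC := sval uC_ex.
Lemma uCeq : uC = (U 9 + U 2 + U 3 + U 6)%MM. Proof. exact: svalP uC_ex. Qed.
Lemma uD_ex : {u : 'X_{1..10} | u = (U 9 + U 6 + U 7 + U 8)%MM}.
Proof. by eexists. Qed.
Definition uD := sval uD_ex.
Lemma uDeq : uD = (U 9 + U 6 + U 7 + U 8)%MM. Proof. exact: svalP uD_ex. Qed.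
Lemma uE_ex : {u : 'X_{1..10} | u = (U 9 + U 9 + U 0 + U 1 + U 2 + U 3 + U 4 + U 5)%MM}.
Proof. by eexists. Qed.
Definition uE := sval uE_ex.
Lemma uEeq : uE = (U 9 + U 9 + U 0 + U 1 + U 2 + U 3 + U 4 + U 5)%MM. Proof. exact: svalP uE_ex. Qed.

Lemma hA : Y * X 1 * X 5 * X 8 = 'X_[uA]. Proof. by rewrite uAeq !mpolyXD !Ueq. Qed.
Lemma hB : Y * X 2 * X 6 * X 9 = 'X_[uB]. Proof. by rewrite uBeq !mpolyXD !Ueq. Qed.
Lemma hC : Y * X 3 * X 4 * X 7 = 'X_[uC]. Proof. by rewrite uCeq !mpolyXD !Ueq. Qed.
Lemma hD : Y * X 7 * X 8 * X 9 = 'X_[uD]. Proof. by rewrite uDeq !mpolyXD !Ueq. Qed.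
Lemma hE : Y ^+ 2 * X 1 * X 2 * X 3 * X 4 * X 5 * X 6 = 'X_[uE].
Proof. by rewrite uEeq !mpolyXD expr2 !Ueq. Qed.

Lemma cmD u v k : cm (u + v) k = (cm u k + cm v k)%N.
Proof. by rewrite /cm mnmDE. Qed.
Lemma cmMn u j k : cm (u *+ j) k = (cm u k * j)%N.
Proof. by rewrite /cm mulmnE. Qed.
Lemma cmU i k : (i < 10)%N -> (k < 10)%N -> cm (U i) k = (i == k).
Proof. by move=> hi hk; rewrite /cm Ueq mnm1E -val_eqE /= !inordK. Qed.
Lemma cm0 k : cm 0%MM k = 0%N.
Proof. by rewrite /cm mnm0E. Qed.

Lemma cm4 a b c d k : (a < 10)%N -> (b < 10)%N -> (c < 10)%N -> (d < 10)%N -> (k < 10)%N ->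
  cm (U a + U b + U c + U d) k = ((a == k) + (b == k) + (c == k) + (d == k))%N.
Proof. by move=> *; rewrite !cmD !cmU. Qed.
Lemma cm8 a b c d e f g h k : (a < 10)%N -> (b < 10)%N -> (c < 10)%N -> (d < 10)%N ->
  (e < 10)%N -> (f < 10)%N -> (g < 10)%N -> (h < 10)%N -> (k < 10)%N ->
  cm (U a + U b + U c + U d + U e + U f + U g + U h) k =
  ((a == k) + (b == k) + (c == k) + (d == k) + (e == k) + (f == k) + (g == k) + (h == k))%N.
Proof. by move=> *; rewrite !cmD !cmU. Qed.

Lemma cmuA k : (k < 10)%N -> cm uA k = nth 0%N [:: 1;0;0;0;1;0;0;1;0;1] k.
Proof. by move=> hk; rewrite uAeq cm4 //; case: k hk => [|[|[|[|[|[|[|[|[|[|k]]]]]]]]]]. Qed.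
Lemma cmuB k : (k < 10)%N -> cm uB k = nth 0%N [:: 0;1;0;0;0;1;0;0;1;1] k.
Proof. by move=> hk; rewrite uBeq cm4 //; case: k hk => [|[|[|[|[|[|[|[|[|[|k]]]]]]]]]]. Qed.
Lemma cmuC k : (k < 10)%N -> cm uC k = nth 0%N [:: 0;0;1;1;0;0;1;0;0;1] k.
Proof. by move=> hk; rewrite uCeq cm4 //; case: k hk => [|[|[|[|[|[|[|[|[|[|k]]]]]]]]]]. Qed.
Lemma cmuD k : (k < 10)%N -> cm uD k = nth 0%N [:: 0;0;0;0;0;0;1;1;1;1] k.
Proof. by move=> hk; rewrite uDeq cm4 //; case: k hk => [|[|[|[|[|[|[|[|[|[|k]]]]]]]]]]. Qed.
Lemma cmuE k : (k < 10)%N -> cm uE k = nth 0%N [:: 1;1;1;1;1;1;0;0;0;2] k.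
Proof. by move=> hk; rewrite uEeq cm8 //; case: k hk => [|[|[|[|[|[|[|[|[|[|k]]]]]]]]]]. Qed.


Definition pi6 (m : 'X_{1..10}) : V6 := V (cm m 0) (cm m 1) (cm m 2) (cm m 6) (cm m 7) (cm m 8).

Lemma mgA : mg uA. Proof. by rewrite mgE !cmuA. Qed.
Lemma mgB : mg uB. Proof. by rewrite mgE !cmuB. Qed.
Lemma mgC : mg uC. Proof. by rewrite mgE !cmuC. Qed.
Lemma mgD : mg uD. Proof. by rewrite mgE !cmuD. Qed.
Lemma mgE' : mg uE. Proof. by rewrite mgE !cmuE. Qed.
Lemma piuA : pi6 uA = vA. Proof. by rewrite /pi6 !cmuA. Qed.
Lemma piuB : pi6 uB = vB. Proof. by rewrite /pi6 !cmuB. Qed.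
Lemma piuC : pi6 uC = vC. Proof. by rewrite /pi6 !cmuC. Qed.
Lemma piuD : pi6 uD = vD. Proof. by rewrite /pi6 !cmuD. Qed.
Lemma piuE : pi6 uE = vE. Proof. by rewrite /pi6 !cmuE. Qed.

Lemma le_pi u m : mg u -> mg m -> (u <= m)%MM = le6 (pi6 u) (pi6 m).
Proof.
rewrite lem10 /= /le6 /= !mgE => hu hm; splitb.
by apply/idP/idP => H; splitb; splitg; lia.
Qed.

Lemma sub_pi u m : pi6 (m - u) = sub6 (pi6 m) (pi6 u).
Proof. by rewrite /pi6 !cmB. Qed.

Lemma T_pi u h H : mg u -> (forall m, mg m -> h m = H (pi6 m)) ->
  forall m, mg m -> fpsT u h m = T6 (pi6 u) H (pi6 m).
Proof.
move=> hu Hh m hm; rewrite /fpsT /T6 -le_pi // Hh //.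
by case: ifP => // hle; rewrite Hh ?mg_sub // sub_pi.
Qed.

Lemma mnm_eq10 (u m : 'X_{1..10}) : (u == m) = all (fun k => cm u k == cm m k)%N (iota 0 10).
Proof.
apply/eqP/allP => [-> k _ // | H]; apply/mnmP => i.
by rewrite -(inord_val i); apply/eqP/H; rewrite mem_iota /= add0n.
Qed.

Lemma zero_pi m : mg m -> (m == 0%MM) = zero6 (pi6 m).
Proof.
rewrite mnm_eq10 /= !cm0 /zero6 /= mgE => hm; splitb.
by apply/idP/idP => H; splitb; splitg; lia.
Qed.

Lemma one_pi m : mg m -> ((uE + uD)%MM == m) = one6 (pi6 m).
Proof.
rewrite mnm_eq10 /= !(cmD uE uD) !cmuE // !cmuD //; rewrite /one6 /= mgE => hm; splitb.
by apply/idP/idP => H; splitb; splitg; lia.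
Qed.

Lemma mg0 : mg 0%MM. Proof. by rewrite mgE !cm0. Qed.
Lemma mgED : mg (uE + uD)%MM. Proof. by rewrite mgE !(cmD uE uD) !cmuE // !cmuD. Qed.


Lemma part1 : forall m : 'X_{1..10},
  mul_poly_fps ((1 - Y * X 1 * X 5 * X 8) * (1 - Y * X 2 * X 6 * X 9) *
     (1 - Y * X 3 * X 4 * X 7) * (1 - Y * X 7 * X 8 * X 9) *
     (1 - Y ^+ 2 * X 1 * X 2 * X 3 * X 4 * X 5 * X 6)) FG2 m
  = ((1 - Y ^+ 2 * X 1 * X 2 * X 3 * X 4 * X 5 * X 6) +
     (Y ^+ 2 * X 1 * X 2 * X 3 * X 4 * X 5 * X 6) * (1 - Y * X 7 * X 8 * X 9))@_m.
Proof.
rewrite hA hB hC hD hE => m.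
have -> : (1 - 'X_[uA]) * (1 - 'X_[uB]) * (1 - 'X_[uC]) * (1 - 'X_[uD]) * (1 - 'X_[uE])
   = (1 - 'X_[uA]) * ((1 - 'X_[uB]) * ((1 - 'X_[uC]) * ((1 - 'X_[uD]) * ((1 - 'X_[uE]) * 1))))
  :> {mpoly int[10]} by rewrite mulr1 !mulrA.
have e5 m' : mul_poly_fps ((1 - 'X_[uE]) * 1) FG2 m' = fpsT uE FG2 m'.
  by rewrite mpf_T; apply: T_ext => m''; exact: mpf_one.
have e4 m' : mul_poly_fps ((1 - 'X_[uD]) * ((1 - 'X_[uE]) * 1)) FG2 m' =
   fpsT uD (fpsT uE FG2) m' by rewrite mpf_T; apply: T_ext.
have e3 m' : mul_poly_fps ((1 - 'X_[uC]) * ((1 - 'X_[uD]) * ((1 - 'X_[uE]) * 1))) FG2 m' =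
   fpsT uC (fpsT uD (fpsT uE FG2)) m' by rewrite mpf_T; apply: T_ext.
have e2 m' : mul_poly_fps ((1 - 'X_[uB]) * ((1 - 'X_[uC]) * ((1 - 'X_[uD]) * ((1 - 'X_[uE]) * 1)))) FG2 m' =
   fpsT uB (fpsT uC (fpsT uD (fpsT uE FG2))) m' by rewrite mpf_T; apply: T_ext.
rewrite mpf_T (@T_ext uA _ _ e2).
set one : fps := fun _ => 1.
have f5 m' : fpsT uE FG2 m' = (mg m')%:Z * fpsT uE one m'.
  by apply: mg_T; [exact: mgE' | move=> m''; rewrite /one mulr1].
have f4 m' : fpsT uD (fpsT uE FG2) m' = (mg m')%:Z * fpsT uD (fpsT uE one) m'.
  by apply: mg_T; [exact: mgD | exact: f5].
have f3 m' : fpsT uC (fpsT uD (fpsT uE FG2)) m' = (mg m')%:Z * fpsT uC (fpsT uD (fpsT uE one)) m'.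
  by apply: mg_T; [exact: mgC | exact: f4].
have f2 m' : fpsT uB (fpsT uC (fpsT uD (fpsT uE FG2))) m' =
    (mg m')%:Z * fpsT uB (fpsT uC (fpsT uD (fpsT uE one))) m'.
  by apply: mg_T; [exact: mgB | exact: f3].
have f1 m' : fpsT uA (fpsT uB (fpsT uC (fpsT uD (fpsT uE FG2)))) m' =
    (mg m')%:Z * fpsT uA (fpsT uB (fpsT uC (fpsT uD (fpsT uE one)))) m'.
  by apply: mg_T; [exact: mgA | exact: f2].
rewrite f1.
have -> : (1 - 'X_[uE]) + 'X_[uE] * (1 - 'X_[uD]) = 1 - 'X_[(uE + uD)%MM] :> {mpoly int[10]}.
  by rewrite mpolyXD mulrBr mulr1 addrA subrK.
rewrite (mcoeffB m) mcoeff1 mcoeffX.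
case hm: (mg m); last first.
  have -> : (m == 0%MM) = false by apply/negbTE/eqP => e; move: hm; rewrite e mg0.
  have -> : ((uE + uD)%MM == m) = false by apply/negbTE/eqP => e; move: hm; rewrite -e mgED.
  by rewrite mul0r subrr.
have g5 m' : mg m' -> fpsT uE one m' = T6 (pi6 uE) (fun _ => 1) (pi6 m').
  by apply: T_pi; [exact: mgE' | by []].
have g4 m' : mg m' -> fpsT uD (fpsT uE one) m' = T6 (pi6 uD) (T6 (pi6 uE) (fun _ => 1)) (pi6 m').
  by apply: T_pi; [exact: mgD | exact: g5].
have g3 m' : mg m' -> fpsT uC (fpsT uD (fpsT uE one)) m' =
    T6 (pi6 uC) (T6 (pi6 uD) (T6 (pi6 uE) (fun _ => 1))) (pi6 m').
  by apply: T_pi; [exact: mgC | exact: g4].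
have g2 m' : mg m' -> fpsT uB (fpsT uC (fpsT uD (fpsT uE one))) m' =
    T6 (pi6 uB) (T6 (pi6 uC) (T6 (pi6 uD) (T6 (pi6 uE) (fun _ => 1)))) (pi6 m').
  by apply: T_pi; [exact: mgB | exact: g3].
have g1 m' : mg m' -> fpsT uA (fpsT uB (fpsT uC (fpsT uD (fpsT uE one)))) m' =
    T6 (pi6 uA) (T6 (pi6 uB) (T6 (pi6 uC) (T6 (pi6 uD) (T6 (pi6 uE) (fun _ => 1))))) (pi6 m').
  by apply: T_pi; [exact: mgA | exact: g2].
rewrite g1 // piuA piuB piuC piuD piuE -/N6.
rewrite mul1r N6E; last 2 first.
- by move: hm; rewrite mgE /pi6 /= => H; splitb; lia.
- by move: hm; rewrite mgE /pi6 /= => H; splitb; lia.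
by rewrite zero_pi // one_pi // !natz.
Qed.


Definition cnd (i j k t : nat) : nat := ((i + j <= t) && (j + k <= t) && (i + k <= t))%N.
Definition G n t := (\sum_(i < n) \sum_(j < n) \sum_(k < n) cnd i j k t)%N.

Fixpoint Tn (a : nat) : nat := if a is a'.+1 then (Tn a' + a'.+2)%N else 1%N.
Fixpoint Nf (t : nat) : nat :=
  match t with
  | 0 => 1
  | 1 => 4
  | t'.+2 as u => (Nf t' + Tn t'.+2 + Tn t'.+1 + Tn t')%N
  end.
Lemma TnS a : Tn a.+1 = (Tn a + a.+2)%N. Proof. by []. Qed.
Lemma NfS t : Nf t.+2 = (Nf t + Tn t.+2 + Tn t.+1 + Tn t)%N. Proof. by []. Qed.

Lemma cnt1 b n : (b < n)%N -> (\sum_(k < n) (k <= b))%N = b.+1.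
Proof.
elim: b n => [|b IH] [|n] //= hb.
  by rewrite big_ord_recl big1 // => i _; rewrite lift0.
rewrite big_ord_recl (eq_bigr (fun k : 'I_n => nat_of_bool (k <= b)%N)); last first.
  by move=> i _; rewrite lift0 ltnS.
by rewrite IH.
Qed.

Lemma Dsum a n1 n2 : (a < n1)%N -> (a < n2)%N ->
  (\sum_(i < n1) \sum_(k < n2) (i + k <= a))%N = Tn a.
Proof.
elim: a n1 => [|a IH] [|n1] // h1 h2.
  rewrite big_ord_recl (eq_bigr (fun k : 'I_n2 => nat_of_bool (k <= 0)%N)) ?cnt1 //.
  rewrite big1 // => i _; apply: big1 => k _; rewrite lift0; by [].
rewrite big_ord_recl (eq_bigr (fun k : 'I_n2 => nat_of_bool (k <= a.+1)%N)) ?cnt1 //.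
rewrite (eq_bigr (fun i : 'I_n1 => \sum_(k < n2) nat_of_bool (i + k <= a)%N)%N).
  by rewrite IH 1?addnC //; apply: ltnW.
by move=> i _; apply: eq_bigr => k _; rewrite lift0 addSn ltnS.
Qed.

Lemma peel (F : nat -> nat -> nat -> nat) n :
  (\sum_(i < n.+1) \sum_(j < n.+1) \sum_(k < n.+1) F i j k)%N =
  (\sum_(j < n.+1) \sum_(k < n.+1) F 0 j k + \sum_(i < n) \sum_(k < n.+1) F i.+1 0 k +
   \sum_(i < n) \sum_(j < n) F i.+1 j.+1 0 +
   \sum_(i < n) \sum_(j < n) \sum_(k < n) F i.+1 j.+1 k.+1)%N.
Proof.
have b0 i : bump 0 i = i.+1 by [].
rewrite big_ord_recl -!addnA; congr (_ + _).
rewrite -!big_split /=; apply: eq_bigr => i _.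
rewrite big_ord_recl ?b0 ?lift0; congr (_ + _).
rewrite -!big_split /=; apply: eq_bigr => j _.
by rewrite big_ord_recl ?b0 ?lift0.
Qed.

Lemma eqsum2 n1 n2 (F1 F2 : nat -> nat -> nat) : (forall i j, F1 i j = F2 i j) ->
  (\sum_(i < n1) \sum_(j < n2) F1 i j)%N = (\sum_(i < n1) \sum_(j < n2) F2 i j)%N.
Proof. by move=> h; apply: eq_bigr => i _; apply: eq_bigr => j _; apply: h. Qed.

Lemma G_rec n t : (t.+2 < n.+1)%N -> G n.+1 t.+2 = (Tn t.+2 + Tn t.+1 + Tn t + G n t)%N.
Proof.
move=> h; rewrite /G (peel (fun i j k => cnd i j k t.+2)); congr (_ + _ + _ + _)%N.
- rewrite -(Dsum t.+2 n.+1 n.+1) //; apply: eq_bigr => i _; apply: eq_bigr => j _; rewrite /cnd; lia.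
- rewrite -(Dsum t.+1 n n.+1) //; try lia; apply: eq_bigr => i _; apply: eq_bigr => j _; rewrite /cnd; lia.
- rewrite -(Dsum t n n) //; try lia; apply: eq_bigr => i _; apply: eq_bigr => j _; rewrite /cnd; lia.
- apply: eq_bigr => i _; apply: eq_bigr => j _; apply: eq_bigr => k _; rewrite /cnd; lia.
Qed.

Lemma G0 n : G n.+1 0 = 1%N.
Proof.
rewrite /G (peel (fun i j k => cnd i j k 0)).
have -> : (\sum_(j < n.+1) \sum_(k < n.+1) cnd 0 j k 0)%N = 1%N.
  rewrite -[RHS]/(Tn 0) -(Dsum 0 n.+1 n.+1) //; apply: eq_bigr => i _; apply: eq_bigr => j _; rewrite /cnd; lia.
rewrite !big1 // => i _; do ?[rewrite big1 // => j _]; do ?[rewrite big1 // => k _]; rewrite /cnd; lia.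
Qed.

Lemma G1 n : (1 < n.+1)%N -> G n.+1 1 = 4%N.
Proof.
move=> h; rewrite /G (peel (fun i j k => cnd i j k 1)).
have -> : (\sum_(j < n.+1) \sum_(k < n.+1) cnd 0 j k 1)%N = 3%N.
  rewrite -[RHS]/(Tn 1) -(Dsum 1 n.+1 n.+1) //; apply: eq_bigr => i _; apply: eq_bigr => j _; rewrite /cnd; lia.
have -> : (\sum_(i < n) \sum_(k < n.+1) cnd i.+1 0 k 1)%N = 1%N.
  rewrite -[RHS]/(Tn 0) -(Dsum 0 n n.+1) //; apply: eq_bigr => i _; apply: eq_bigr => j _; rewrite /cnd; lia.
rewrite !big1 // => i _; do ?[rewrite big1 // => j _]; do ?[rewrite big1 // => k _]; rewrite /cnd; lia.
Qed.

Lemma G_Nf t n : (t < n)%N -> G n t = Nf t.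
Proof.
suff H : forall t, (forall n, t < n -> G n t = Nf t)%N /\ (forall n, t.+1 < n -> G n t.+1 = Nf t.+1)%N.
  by case: (H t) => h _; apply: h.
move=> {t n}; elim=> [|t [IH1 IH2]].
  split=> [[|n] // _ | [|n] // h]; [exact: G0 | exact: G1].
split=> // [[|n] // h].
rewrite G_rec // NfS IH1 //; lia.
Qed.


Lemma mag_inj (al be : 'I_9 -> nat) s : is_magic G2_ends al s -> is_magic G2_ends be s ->
  al (inord 0) = be (inord 0) -> al (inord 1) = be (inord 1) -> al (inord 2) = be (inord 2) ->
  forall k, (k < 9)%N -> al (inord k) = be (inord k).
Proof.
rewrite !magicE => ha hb f0 f1 f2; splitb.
by move=> k hk; case: k hk => [|[|[|[|[|[|[|[|[|k]]]]]]]]] hk //=; lia.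
Qed.

Lemma hG2_G s : hG2 s = G s.+1 s.
Proof.
pose M := [set a : {ffun 'I_9 -> 'I_s.+1} | is_magic G2_ends (fun i => nat_of_ord (a i)) s].
pose C := [set p : 'I_s.+1 * 'I_s.+1 * 'I_s.+1 |
            ((p.1.1 + p.1.2 <= s) && (p.1.2 + p.2 <= s) && (p.1.1 + p.2 <= s))%N].
pose phi (a : {ffun 'I_9 -> 'I_s.+1}) := (a (inord 0), a (inord 1), a (inord 2)).
have -> : hG2 s = #|M| by [].
have injM : {in M &, injective phi}.
  move=> a b; rewrite !inE => ha hb [e0 e1 e2].
  apply/ffunP => x; apply: ord_inj; rewrite -(inord_val x).
  exact: (mag_inj _ _ _ ha hb (congr1 (@nat_of_ord _) e0) (congr1 (@nat_of_ord _) e1)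
    (congr1 (@nat_of_ord _) e2) _ (ltn_ord x)).
rewrite -(card_in_imset injM).
have -> : phi @: M = C.
  apply/setP => p; rewrite inE; apply/imsetP/idP.
    case=> a; rewrite inE magicE => ha ->; splitb; rewrite /phi /=; lia.
  case: p => [[i j] k] /= hc.
  pose L := [:: val i; val j; val k; val k; val i; val j; s - i - j; s - j - k; s - i - k]%N.
  pose a := [ffun x : 'I_9 => (inord (nth 0%N L x) : 'I_s.+1)].
  have hL : all (fun v => v <= s)%N L by rewrite /L /=; splitb; splitg; lia.
  have va m : (m < 9)%N -> nat_of_ord (a (inord m)) = nth 0%N L m.
    move=> hm; rewrite ffunE (inordK hm) inordK // ltnS.
    by apply: (allP hL); rewrite mem_nth.
  exists a.
    rewrite inE magicE !va //= /L; splitb; splitg; lia.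
  by rewrite /phi; congr (_, _, _); apply: ord_inj; rewrite va.
rewrite -sum1_card big_mkcond /G.
rewrite pair_big /= pair_big /=.
apply: eq_bigr => [[[i j] k]] _; rewrite inE /cnd /=.
by case: ifP.
Qed.


Lemma hG2_Nf s : hG2 s = Nf s.
Proof. by rewrite hG2_G G_Nf. Qed.

Definition cl : seq int := [:: 1; -3; 2; 2; -3; 1].

Lemma pcoef k : ((1 - 'X) ^+ 3 * (1 - 'X ^+ 2) : {poly int})`_k = nth 0 cl k.
Proof.
have -> : ((1 - 'X) ^+ 3 * (1 - 'X ^+ 2) : {poly int}) =
   1 - 'X *+ 3 + 'X ^+ 2 *+ 2 + 'X ^+ 3 *+ 2 - 'X ^+ 4 *+ 3 + 'X ^+ 5 by ring.
rewrite !coefE.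
by case: k => [|[|[|[|[|[|k]]]]]] /=; rewrite ?nth_nil.
Qed.

Arguments Nf : simpl never.
Arguments Tn : simpl never.

Lemma part2 s : mul_poly_fps1 ((1 - 'X) ^+ 3 * (1 - 'X ^+ 2)) hG2 s
     = (1 + 'X + 'X ^+ 2 : {poly int})`_s.
Proof.
rewrite /mul_poly_fps1 (eq_bigr (fun k : 'I_s.+1 => nth 0 cl k * (Nf (s - k))%:Z)); last first.
  by move=> k _; rewrite pcoef hG2_Nf.
rewrite !coefE.
case: s => [|[|[|[|[|t]]]]].
- by rewrite !big_ord_recl big_ord0.
- by rewrite !big_ord_recl big_ord0.
- by rewrite !big_ord_recl big_ord0.
- by rewrite !big_ord_recl big_ord0.
- by rewrite !big_ord_recl big_ord0.
have b0 i : bump 0 i = i.+1 by [].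
rewrite !big_ord_recl /= !b0 !subSS !subn0 big1; last by move=> i _; rewrite nth_nil mul0r.
have := NfS t.+3; have := NfS t.+2; have := NfS t.+1; have := NfS t.
have := TnS t.+4; have := TnS t.+3; have := TnS t.+2; have := TnS t.+1; have := TnS t.
lia.
Qed.

Theorem mainTheorem4 :
  (let A := Y * X 1 * X 5 * X 8 in
   let B := Y * X 2 * X 6 * X 9 in
   let C := Y * X 3 * X 4 * X 7 in
   let D := Y * X 7 * X 8 * X 9 in
   let E := Y ^+ 2 * X 1 * X 2 * X 3 * X 4 * X 5 * X 6 in
   forall m : 'X_{1..10},
     mul_poly_fps ((1 - A) * (1 - B) * (1 - C) * (1 - D) * (1 - E)) FG2 m
     = ((1 - E) + E * (1 - D))@_m)
  /\
  (forall s : nat,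
     mul_poly_fps1 ((1 - 'X) ^+ 3 * (1 - 'X ^+ 2)) hG2 s
     = (1 + 'X + 'X ^+ 2 : {poly int})`_s).
Proof.
split; [exact: part1 | exact: part2].
Qed.
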